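(* Let $\psi$ be a colouring. 1. The equation $\psi\ltimes\xi=\psi[+1]$ has a regular summable solution $\xi\in\mathcal C_0$ if and only if $\psi$, viewed as an element of $\mathcal C_1$, is regular. 2. Suppose that $\psi$ is regular, and let $d\ge0$. Then $\xi\mapsto\psi\ltimes\xi$ is a $\mathbb k[[h]]$-linear bijection from the set of regular summable sequences in $\mathcal C_d$ onto the set of regular sequences of Verma type in $\mathcal C_d$.
   Context: $\mathbb k$ is a field of characteristic zero, and $\mathbb k[[h]]$ is the ring of formal power series over $\mathbb k$. A colouring is a sequence $\psi=(\psi^k)_{k\ge1}$ of functions $\psi^k:\mathbb Z\to\mathbb k[[h]]$ satisfying: - (C1) $\psi^k(n)\equiv k(n-k+1)\bmod h$; - (C2) $\psi^{n+1}(n)=0$ for all $n\ge0$; - (C3) $\psi^{n+k+1}(n)=\psi^k(-n-2)$ for all $k\ge1$ and all $n\ge0$. Sequences. For $d\in\mathbb N$, $\mathcal C_d$ is the $\mathbb k[[h]]$-module of sequences $f=(f^k)_{k\ge d}$ of functions $f^k:\mathbb Z\to\mathbb k[[h]]$. We write $f^k(n)=\sum_{m\ge0}f^k_m(n)h^m$ with $f^k_m:\mathbb Z\to\mathbb k$. - $f$ is summable if for each $m$ one has $f^k_m\equiv0$ for all sufficiently large $k$. - $f$ is regular if each $f^k_m$ is a polynomial function of $n$, and for each $m$ the degree of $f^k_m$ is bounded independently of $k$. - $f$ is of Verma type if $f^k(n)=0$ for all $k\ge d$ and $n\ge0$ with $n+1\le k\le n+d$, and $f^{n+k+1}(n)=f^k(-n-2)$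 for all $k\ge d$ and $n\ge0$. A colouring is an element of $\mathcal C_1$. Define $\psi[+1]\in\mathcal C_0$ by $(\psi[+1])^k=\psi^{k+1}$ for $k\ge0$. For $\xi\in\mathcal C_d$, define $\psi\ltimes\xi\in\mathcal C_d$ by $$(\psi\ltimes\xi)^k(n)=\sum_{a=d}^k\Big(\prod_{b=k-a+1}^k\psi^b(n)\Big)\xi^a(n-2k)\qquad(k\ge d),$$ where the empty product is $1$. *)

(* Defs.v *)
From HB Require Import structures.
From mathcomp Require Import all_boot all_order all_algebra.
Set Implicit Arguments. Unset Strict Implicit. Unset Printing Implicit Defensive.
Import Order.TTheory GRing.Theory Num.Theory.
Local Open Scope ring_scope.

(* Formal power series k[[h]], represented by their coefficient sequence:
   f = \sum_m f m h^m. *)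
Definition ps (K : fieldType) := nat -> K.

Section PS.
Variable K : fieldType.
Definition ps0 : ps K := fun _ => 0.
Definition ps1 : ps K := fun m => if m == 0%N then 1 else 0.
Definition ps_add (f g : ps K) : ps K := fun m => f m + g m.
Definition ps_mul (f g : ps K) : ps K :=
  fun m => \sum_(i < m.+1) f i * g (m - i)%N.

(* A sequence (f^k)_{k>=d} of functions Z -> k[[h]], stored as a total
   function nat -> int -> ps K that is zero for indices k < d (canonical
   representative; C_d is identified with such functions). *)
Definition sqc := nat -> int -> ps K.

Definition inC (d : nat) (f : sqc) : Prop := forall k, (k < d)%N -> f k = fun _ => ps0.

Definition summable (f : sqc) : Prop :=
  forall m : nat, exists k0 : nat, forall k : nat, (k0 <= k)%N -> forall n : int, f k n m = 0.

Definition regular (d : nat) (f : sqc) : Prop :=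
  forall m : nat, exists D : nat, forall k : nat, (d <= k)%N ->
    exists p : {poly K}, (size p <= D)%N /\ forall n : int, f k n m = p.[n%:~R].

Definition verma (d : nat) (f : sqc) : Prop :=
  (forall (k n : nat), (d <= k)%N -> (n + 1 <= k <= n + d)%N -> f k (n%:Z) = ps0) /\
  (forall (k n : nat), (d <= k)%N -> f (n + k + 1)%N (n%:Z) = f k (- (n%:Z) - 2)).

Definition colouring (psi : sqc) : Prop :=
  [/\ inC 1 psi,
      (forall (k : nat) (n : int), (1 <= k)%N ->
          psi k n 0%N = (k%:Z * (n - k%:Z + 1))%:~R),
      (forall n : nat, psi n.+1 (n%:Z) = ps0) &
      (forall (k n : nat), (1 <= k)%N -> psi (n + k + 1)%N (n%:Z) = psi k (- (n%:Z) - 2))].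

Definition shift1 (psi : sqc) : sqc := fun k => psi k.+1.

Definition ltimes (d : nat) (psi xi : sqc) : sqc :=
  fun k n => if (k < d)%N then ps0 else
    \big[ps_add/ps0]_(d <= a < k.+1)
       ps_mul (\big[ps_mul/ps1]_((k - a + 1)%N <= b < k.+1) psi b n)
              (xi a (n - (2 * k)%N%:Z)).

Definition sqc_add (f g : sqc) : sqc := fun k n => ps_add (f k n) (g k n).
Definition sqc_scale (c : ps K) (f : sqc) : sqc := fun k n => ps_mul c (f k n).
End PS.

(* Main.v *)
Require Import Defs.
From HB Require Import structures.
From mathcomp Require Import all_boot all_order all_algebra.
From mathcomp Require Import zify ring.
From Stdlib Require Import ClassicalEpsilon FunctionalExtensionality.
Import GRing.Theory.
Local Open Scope ring_scope.
Set Implicit Arguments. Unset Strict Implicit. Unset Printing Implicit Defensive.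

Section Aux.
Variable K : fieldType.
Implicit Types f g h : ps K.

Lemma ps_ext f g : (forall m, f m = g m) -> f = g.
Proof. exact: functional_extensionality. Qed.

Definition tr (m : nat) f : {poly K} := \poly_(i < m.+1) f i.

Lemma ps_mulE m i f g : (i <= m)%N -> ps_mul f g i = (tr m f * tr m g)`_i.
Proof.
move=> im; rewrite coefM /ps_mul; apply: eq_bigr => j _.
rewrite !coef_poly; have jm : (j < m.+1)%N.
  by apply: leq_trans (ltn_ord j) _; rewrite ltnS.
rewrite jm ifT //; rewrite ltnS (leq_trans (leq_subr _ _) im) //.
Qed.

Lemma coefM_lowl (p p' q : {poly K}) i :
  (forall j, (j <= i)%N -> p`_j = p'`_j) -> (p * q)`_i = (p' * q)`_i.
Proof.
move=> H; rewrite !coefM; apply: eq_bigr => j _; rewrite H //.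
by rewrite -ltnS.
Qed.

Lemma coefM_lowr (p q q' : {poly K}) i :
  (forall j, (j <= i)%N -> q`_j = q'`_j) -> (p * q)`_i = (p * q')`_i.
Proof.
move=> H; rewrite !coefM; apply: eq_bigr => j _; rewrite H //.
exact: leq_subr.
Qed.

Lemma ps_mulC f g : ps_mul f g = ps_mul g f.
Proof. by apply: ps_ext => m; rewrite !(ps_mulE _ _ (leqnn m)) mulrC. Qed.

Lemma ps_mulA f g h : ps_mul f (ps_mul g h) = ps_mul (ps_mul f g) h.
Proof.
apply: ps_ext => m; rewrite !(ps_mulE _ _ (leqnn m)).
rewrite (@coefM_lowr _ _ (tr m g * tr m h)); last first.
  move=> j jm; rewrite coef_poly ltnS jm; exact: ps_mulE.
rewrite [in RHS](@coefM_lowl _ (tr m f * tr m g)); last first.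
  move=> j jm; rewrite coef_poly ltnS jm; exact: ps_mulE.
by rewrite mulrA.
Qed.

Lemma ps_mulDr f g h : ps_mul f (ps_add g h) = ps_add (ps_mul f g) (ps_mul f h).
Proof.
apply: ps_ext => m; rewrite /ps_mul /ps_add -big_split /=.
by apply: eq_bigr => i _; rewrite mulrDr.
Qed.

Lemma ps_mul0r f : ps_mul (ps0 K) f = (ps0 K).
Proof. by apply: ps_ext => m; rewrite /ps_mul big1 // => i _; rewrite mul0r. Qed.

Lemma ps_mulr0 f : ps_mul f (ps0 K) = (ps0 K).
Proof. by rewrite ps_mulC ps_mul0r. Qed.

Lemma ps_mul1r f : ps_mul (ps1 K) f = f.
Proof.
apply: ps_ext => m; rewrite /ps_mul big_ord_recl /= mul1r subn0 big1 ?addr0 //.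
by move=> i _; rewrite /ps1 /= mul0r.
Qed.

Lemma ps_mulr1 f : ps_mul f (ps1 K) = f.
Proof. by rewrite ps_mulC ps_mul1r. Qed.

Lemma ps_mul_0 f g : ps_mul f g 0%N = f 0%N * g 0%N.
Proof. by rewrite /ps_mul big_ord1. Qed.

Lemma coef_bigadd (I : Type) (r : seq I) (P : pred I) (F : I -> ps K) j :
  (\big[@ps_add K/ps0 K]_(i <- r | P i) F i) j = \sum_(i <- r | P i) F i j.
Proof.
elim: r => [|x r IH]; first by rewrite !big_nil.
by rewrite !big_cons; case: (P x) => //; rewrite /ps_add IH.
Qed.

Lemma ps_mul_bigadd (I : Type) (r : seq I) (P : pred I) (F : I -> ps K) c :
  ps_mul c (\big[@ps_add K/ps0 K]_(i <- r | P i) F i)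
  = \big[@ps_add K/ps0 K]_(i <- r | P i) ps_mul c (F i).
Proof.
elim: r => [|x r IH]; first by rewrite !big_nil ps_mulr0.
by rewrite !big_cons; case: (P x) => //; rewrite ps_mulDr IH.
Qed.

Lemma coef0_bigmul (I : Type) (r : seq I) (F : I -> ps K) :
  (\big[@ps_mul K/ps1 K]_(i <- r) F i) 0%N = \prod_(i <- r) F i 0%N.
Proof.
elim: r => [|x r IH]; first by rewrite !big_nil.
by rewrite !big_cons ps_mul_0 IH.
Qed.

Lemma bigmul_zero (I : eqType) (r : seq I) (F : I -> ps K) i :
  i \in r -> F i = ps0 K -> \big[@ps_mul K/ps1 K]_(x <- r) F x = ps0 K.
Proof.
elim: r => [|x r IH] //; rewrite in_cons big_cons => /orP [/eqP <- -> | ir Fi].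
  exact: ps_mul0r.
by rewrite IH // ps_mulr0.
Qed.

Lemma big_iota_shift (R : Type) (idx : R) (op : R -> R -> R) (F G : nat -> R) s t len :
  (forall i, (i < len)%N -> F (s + i)%N = G (t + i)%N) ->
  \big[op/idx]_(b <- iota s len) F b = \big[op/idx]_(b <- iota t len) G b.
Proof.
elim: len s t => [|l IH] s t H; first by rewrite !big_nil.
rewrite /= !big_cons; have := H 0%N isT; rewrite !addn0 => ->.
congr (op _ _); apply: IH => i il.
by rewrite !addSnnS; apply: H.
Qed.

End Aux.

Section PF.
Variable K : fieldType.
Hypothesis charK : [pchar K] =i pred0.

Definition pf (D : nat) (g : int -> K) :=
  exists p : {poly K}, (size p <= D.+1)%N /\ forall n, g n = p.[n%:~R].

Lemma pf_mono D D' g : (D <= D')%N -> pf D g -> pf D' g.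
Proof. by move=> DD [p [sp Hp]]; exists p; split=> //; apply: leq_trans sp _. Qed.

Lemma pf_const D c : pf D (fun _ => c).
Proof.
exists c%:P; split; last by move=> n; rewrite hornerC.
exact: leq_trans (size_polyC_leq1 c) _.
Qed.

Lemma pf_eq D g h : (forall n, g n = h n) -> pf D g -> pf D h.
Proof. by move=> E [p [sp Hp]]; exists p; split=> // n; rewrite -E. Qed.

Lemma pf_add D g h : pf D g -> pf D h -> pf D (fun n => g n + h n).
Proof.
move=> [p [sp Hp]] [q [sq Hq]]; exists (p + q); split.
  by apply: leq_trans (size_polyD _ _) _; rewrite geq_max sp sq.
by move=> n; rewrite hornerD Hp Hq.
Qed.

Lemma pf_opp D g : pf D g -> pf D (fun n => - g n).
Proof.
by move=> [p [sp Hp]]; exists (- p); split; [rewrite size_polyN | move=> n; rewrite hornerN Hp].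
Qed.

Lemma pf_mul D1 D2 g h : pf D1 g -> pf D2 h -> pf (D1 + D2) (fun n => g n * h n).
Proof.
move=> [p [sp Hp]] [q [sq Hq]]; exists (p * q); split.
  apply: leq_trans (size_polyMleq _ _) _.
  move: sp sq; lia.
by move=> n; rewrite hornerM Hp Hq.
Qed.

Lemma pf_scale D c g : pf D g -> pf D (fun n => c * g n).
Proof. by move=> H; have := pf_mul (pf_const 0 c) H. Qed.

Lemma pf_sum (I : Type) (r : seq I) (P : pred I) D (F : I -> int -> K) :
  (forall i, P i -> pf D (F i)) -> pf D (fun n => \sum_(i <- r | P i) F i n).
Proof.
move=> H; elim: r => [|x r IH].
  by apply: (pf_eq _ (pf_const D 0)) => n; rewrite big_nil.
case Px: (P x).
  by apply: (pf_eq _ (pf_add (H x Px) IH)) => n; rewrite big_cons Px.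
by apply: (pf_eq _ IH) => n; rewrite big_cons Px.
Qed.

Lemma pf_prod (I : Type) (r : seq I) D (F : I -> int -> K) :
  (forall i, pf D (F i)) -> pf (size r * D) (fun n => \prod_(i <- r) F i n).
Proof.
move=> H; elim: r => [|x r IH].
  by apply: (pf_eq _ (pf_const _ 1)) => n; rewrite big_nil.
by apply: (pf_eq _ (pf_mul (H x) IH)) => n; rewrite big_cons.
Qed.

Lemma pf_shift D g (c : int) : pf D g -> pf D (fun n => g (n + c)).
Proof.
move=> [p [sp Hp]]; exists (p \Po ('X + (c%:~R)%:P)); split.
  apply: leq_trans (size_comp_poly_leq _ _) _.
  by rewrite size_XaddC muln1; move: sp; lia.
by move=> n; rewrite horner_comp hornerD hornerX hornerC Hp intrD.
Qed.

Lemma pf_X : pf 1 (fun n => n%:~R).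
Proof. by exists 'X; split; [rewrite size_polyX | move=> n; rewrite hornerX]. Qed.

Lemma intr_eq0_c0 (z : int) : (z%:~R == 0 :> K) = (z == 0).
Proof.
have H := (pcharf0P K).1 charK.
case: z => n; first by rewrite -pmulrn H.
by rewrite NegzE mulrNz oppr_eq0 -pmulrn H.
Qed.

Lemma intr_inj_c0 : injective (fun z : int => z%:~R : K).
Proof.
move=> a b /= E; apply/eqP; rewrite -subr_eq0 -intr_eq0_c0 intrB E subrr //.
Qed.

Lemma poly_zero_shift (p : {poly K}) (c : int) :
  (forall t : nat, p.[(t%:Z + c)%:~R] = 0) -> p = 0.
Proof.
move=> H; apply: (@roots_geq_poly_eq0 _ p [seq (t%:Z + c)%:~R | t <- iota 0 (size p)]).
- by apply/allP => x /mapP [t _ ->]; rewrite /root H.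
- rewrite map_inj_uniq ?iota_uniq // => a b /intr_inj_c0 /eqP.
  by move/eqP => E; lia.
- by rewrite size_map size_iota.
Qed.

Lemma pf_zero_shift D g (c : int) :
  pf D g -> (forall t : nat, g (t%:Z + c) = 0) -> forall n, g n = 0.
Proof.
move=> [p [sp Hp]] H n; rewrite Hp (@poly_zero_shift p c) ?horner0 //.
by move=> t; rewrite -Hp.
Qed.

End PF.

Section LT.
Variable K : fieldType.
Implicit Types psi xi eta : sqc K.

Definition Prod psi (k a : nat) (n : int) : ps K :=
  \big[@ps_mul K/ps1 K]_((k - a + 1)%N <= b < k.+1) psi b n.

Definition cc psi (k a : nat) (n : int) : K :=
  \prod_((k - a + 1)%N <= b < k.+1) psi b n 0%N.

Definition T0 psi (z : nat -> int -> K) (k : nat) (n : int) : K :=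
  \sum_(0 <= a < k.+1) cc psi k a n * z a (n - (2 * k)%N%:Z).

Lemma Prod0 psi k a n : Prod psi k a n 0%N = cc psi k a n.
Proof. by rewrite /Prod coef0_bigmul. Qed.

Lemma ltimes_coef d psi xi k n j : (d <= k)%N ->
  ltimes d psi xi k n j = \sum_(d <= a < k.+1) \sum_(i < j.+1)
      Prod psi k a n i * xi a (n - (2 * k)%N%:Z) (j - i)%N.
Proof.
by move=> dk; rewrite /ltimes ltnNge dk /= coef_bigadd.
Qed.

Lemma ltimes_d0 d psi xi : inC d xi -> ltimes d psi xi = ltimes 0 psi xi.
Proof.
move=> Hx; apply: functional_extensionality => k; apply: functional_extensionality => n.
apply: ps_ext => j; rewrite (ltimes_coef _ _ _ _ (leq0n k)).
have zterm : forall a, (a < d)%N -> \sum_(i < j.+1)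
      Prod psi k a n i * xi a (n - (2 * k)%N%:Z) (j - i)%N = 0.
  by move=> a ad; rewrite Hx // big1 // => i _; rewrite /ps0 mulr0.
case: (ltnP k d) => kd.
  rewrite /ltimes kd /ps0 big_nat_cond big1 // => a /andP [/andP [_ ak] _].
  by apply: zterm; apply: leq_trans kd.
rewrite ltimes_coef // [RHS](@big_cat_nat _ _ _ d) //=; last by lia.
by rewrite [X in _ = X + _]big_nat_cond [X in _ = X + _]big1 ?add0r // => a /andP [/andP [_ ad] _]; apply: zterm.
Qed.

Lemma ltimes0_coef psi xi k n j :
  ltimes 0 psi xi k n j = \sum_(0 <= a < k.+1) \sum_(i < j.+1)
      Prod psi k a n i * xi a (n - (2 * k)%N%:Z) (j - i)%N.
Proof. exact: ltimes_coef. Qed.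

Lemma ltimes_agree psi xi eta j :
  (forall l, (l <= j)%N -> forall a n, xi a n l = eta a n l) ->
  forall k n, ltimes 0 psi xi k n j = ltimes 0 psi eta k n j.
Proof.
move=> H k n; rewrite !ltimes0_coef; apply: eq_bigr => a _; apply: eq_bigr => i _.
by rewrite H // leq_subr.
Qed.

Lemma ltimes_low psi xi m :
  (forall l, (l < m)%N -> forall a n, xi a n l = 0) -> forall k n,
  (forall j, (j < m)%N -> ltimes 0 psi xi k n j = 0) /\
  ltimes 0 psi xi k n m = T0 psi (fun a n => xi a n m) k n.
Proof.
move=> H k n; split.
  move=> j jm; rewrite ltimes0_coef big1 // => a _; rewrite big1 // => i _.
  by rewrite H ?mulr0 //; apply: leq_ltn_trans (leq_subr _ _) jm.
rewrite ltimes0_coef /T0; apply: eq_bigr => a _.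
rewrite big_ord_recl /= subn0 Prod0 big1 ?addr0 // => i _.
by rewrite H ?mulr0 //; have := ltn_ord i; rewrite /bump /=; lia.
Qed.

Lemma sum_psadd (I : Type) (r : seq I) (P : pred I) (F G : I -> ps K) :
  \big[@ps_add K/ps0 K]_(i <- r | P i) ps_add (F i) (G i) =
  ps_add (\big[@ps_add K/ps0 K]_(i <- r | P i) F i) (\big[@ps_add K/ps0 K]_(i <- r | P i) G i).
Proof.
apply: ps_ext => j; rewrite /ps_add !coef_bigadd -big_split /=.
by apply: eq_bigr => i _; rewrite /ps_add.
Qed.

Lemma ltimes_lin d psi c xi eta :
  ltimes d psi (sqc_add (sqc_scale c xi) eta)
  = sqc_add (sqc_scale c (ltimes d psi xi)) (ltimes d psi eta).
Proof.
apply: functional_extensionality => k; apply: functional_extensionality => n.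
rewrite /ltimes /sqc_add /sqc_scale; case: (k < d)%N.
  by rewrite ps_mulr0; apply: ps_ext => j; rewrite /ps_add /ps0 addr0.
rewrite ps_mul_bigadd -sum_psadd; apply: eq_bigr => a _.
by rewrite ps_mulDr !ps_mulA (ps_mulC c).
Qed.

Lemma T0_lin psi (z w : nat -> int -> K) c k n :
  T0 psi (fun a n => c * z a n + w a n) k n = c * T0 psi z k n + T0 psi w k n.
Proof.
rewrite /T0 big_distrr -big_split /=; apply: eq_bigr => a _; ring.
Qed.

Lemma ltimes_verma d psi xi : colouring psi -> inC d xi -> verma d (ltimes d psi xi).
Proof.
case=> _ _ C2 C3 Hx; split.
  move=> k n dk /andP [k1 k2]; apply: ps_ext => j.
  rewrite ltimes_coef // big_nat_cond big1 // => a /andP [/andP [da ak] _].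
  have -> : Prod psi k a n = ps0 K.
    apply: (@bigmul_zero _ _ _ _ n.+1); last exact: C2.
    by rewrite mem_index_iota; apply/andP; split; lia.
  by rewrite big1 // => i _; rewrite /ps0 mul0r.
move=> k n dk; rewrite !ltimes_d0 //; apply: ps_ext => j.
rewrite !ltimes0_coef (@big_cat_nat _ _ _ k.+1) //=; last by lia.
rewrite [X in _ + X]big_nat_cond [X in _ + X]big1 ?addr0; last first.
  move=> a /andP [/andP [ka an] _].
  have -> : Prod psi (n + k + 1) a n = ps0 K.
    apply: (@bigmul_zero _ _ _ _ n.+1); last exact: C2.
    by rewrite mem_index_iota; apply/andP; split; lia.
  by rewrite big1 // => i _; rewrite /ps0 mul0r.
rewrite big_nat_cond [RHS]big_nat_cond; apply: eq_bigr => a /andP [/andP [_ ak] _].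
have -> : (n%:Z - (2 * (n + k + 1))%N%:Z) = (- n%:Z - 2 - (2 * k)%N%:Z) by lia.
have -> : Prod psi (n + k + 1) a n = Prod psi k a (- n%:Z - 2); last by [].
rewrite /Prod /index_iota.
have -> : ((n + k + 1).+1 - (n + k + 1 - a + 1) = a)%N by lia.
have -> : (k.+1 - (k - a + 1) = a)%N by lia.
apply: big_iota_shift => i ia.
have -> : (n + k + 1 - a + 1 + i = n + (k - a + 1 + i) + 1)%N by lia.
by rewrite C3 //; lia.
Qed.

End LT.

Section REG.
Variable K : fieldType.
Implicit Types psi xi eta : sqc K.

Lemma regular_pf d (f : sqc K) :
  regular d f <-> forall m, exists D, forall k, (d <= k)%N -> pf D (fun n => f k n m).
Proof.
split=> H m; have [D HD] := H m.
  exists D => k dk; have [p [sp Hp]] := HD k dk; exists p; split => //.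
  exact: leqW.
exists D.+1 => k dk; have [p [sp Hp]] := HD k dk; by exists p.
Qed.

Lemma upto (Q : nat -> nat -> Prop) :
  (forall m, exists D, Q m D) -> (forall m D D', (D <= D')%N -> Q m D -> Q m D') ->
  forall j, exists D, forall m, (m <= j)%N -> Q m D.
Proof.
move=> H Hm; elim=> [|j [D HD]].
  by have [D HD] := H 0%N; exists D => m; rewrite leqn0 => /eqP ->.
have [D' HD'] := H j.+1; exists (maxn D D') => m; rewrite leq_eqVlt => /orP [/eqP -> | mj].
  by apply: Hm HD'; rewrite leq_maxr.
by apply: Hm (HD m mj); rewrite leq_maxl.
Qed.

Lemma summ_upto xi : summable xi -> forall j, exists A, forall l, (l <= j)%N ->
  forall a, (A <= a)%N -> forall n, xi a n l = 0.
Proof.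
move=> H; apply: (upto (Q := fun l A => forall a, (A <= a)%N -> forall n, xi a n l = 0)).
  exact: H.
by move=> m D D' DD HD a Da; apply: HD; apply: leq_trans Da.
Qed.

Lemma all_pf d (f : sqc K) : inC d f -> regular d f ->
  forall j, exists D, forall l a, (l <= j)%N -> pf D (fun n => f a n l).
Proof.
move=> Hc /regular_pf H j.
have [D HD] := upto (Q := fun l D => forall a, (d <= a)%N -> pf D (fun n => f a n l))
   H (fun m D D' DD HD a da => pf_mono DD (HD a da)) j.
exists D => l a lj; case: (ltnP a d) => ad.
  by rewrite Hc //; apply: pf_const.
exact: HD.
Qed.

Lemma bigmul_pf (F : nat -> int -> ps K) (r : seq nat) D i :
  (forall b l, (l <= i)%N -> pf D (fun n => F b n l)) ->
  forall l, (l <= i)%N -> pf (size r * D) (fun n => (\big[@ps_mul K/ps1 K]_(b <- r) F b n) l).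
Proof.
move=> H; elim: r => [|x r IH] l li.
  by apply: (pf_eq _ (pf_const _ (ps1 K l))) => n; rewrite big_nil.
apply: (pf_eq (g := fun n => \sum_(t < l.+1) F x n t *
   (\big[@ps_mul K/ps1 K]_(b <- r) F b n) (l - t)%N)).
  by move=> n; rewrite big_cons.
apply: pf_sum => t _; rewrite mulSn; apply: pf_mul.
  by apply: H; apply: leq_trans li; rewrite -ltnS.
by apply: IH; apply: leq_trans li; apply: leq_subr.
Qed.

Lemma Prod_pf psi D i : (forall b l, (l <= i)%N -> pf D (fun n => psi b n l)) ->
  forall k a l, (l <= i)%N -> pf (a * D) (fun n => Prod psi k a n l).
Proof.
move=> H k a l li.
have P := bigmul_pf (F := psi) (index_iota (k - a + 1) k.+1) H li.
apply: pf_mono P.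
by rewrite leq_mul2r size_iota; apply/orP; right; lia.
Qed.

Lemma ltimes_inC d psi xi : inC d (ltimes d psi xi).
Proof. by move=> k kd; rewrite /ltimes; apply: functional_extensionality => n; rewrite kd. Qed.

Lemma ltimes_reg d psi xi : inC 1 psi -> regular 1 psi ->
  inC d xi -> regular d xi -> summable xi -> regular d (ltimes d psi xi).
Proof.
move=> Pc Pr Xc Xr Xs; apply/regular_pf => j.
have [Dp HDp] := all_pf Pc Pr j.
have [Dx HDx] := all_pf Xc Xr j.
have [A HA] := summ_upto Xs j.
exists (A * Dp + Dx)%N => k dk.
apply: (pf_eq (g := fun n => \sum_(0 <= a < k.+1) \sum_(i < j.+1)
      Prod psi k a n i * xi a (n - (2 * k)%N%:Z) (j - i)%N)).
  by move=> n; rewrite ltimes_d0 // ltimes0_coef.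
apply: pf_sum => a _; case: (ltnP a A) => aA.
  apply: pf_sum => i _; apply: pf_mul.
    apply: (pf_mono (D := (a * Dp)%N)); first by rewrite leq_mul2r ltnW ?orbT.
    apply: (Prod_pf (i := j)); first by move=> b l lj; apply: HDp.
    by rewrite -ltnS.
  apply: (pf_shift (g := fun n => xi a n (j - i)%N)); apply: HDx; exact: leq_subr.
apply: (pf_eq _ (pf_const _ 0)) => n; rewrite big1 // => i _.
by rewrite HA ?mulr0 // leq_subr.
Qed.

End REG.

Section ORD0.
Variable K : fieldType.
Hypothesis charK : [pchar K] =i pred0.
Variable psi : sqc K.
Hypothesis Hpsi : colouring psi.

Definition inC0 d (g : nat -> int -> K) := forall k, (k < d)%N -> forall n, g k n = 0.
Definition verma0 d (g : nat -> int -> K) :=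
  (forall (k n : nat), (d <= k)%N -> (n + 1 <= k <= n + d)%N -> g k (n%:Z) = 0) /\
  (forall (k n : nat), (d <= k)%N -> g (n + k + 1)%N (n%:Z) = g k (- (n%:Z) - 2)).

Lemma psi0 b n : psi b n 0%N = if (b == 0)%N then 0 else (b%:Z * (n - b%:Z + 1))%:~R.
Proof.
case: Hpsi => Hc C1 _ _; case: eqP => [->|/eqP b0]; first by rewrite Hc.
by rewrite C1 // lt0n.
Qed.

Lemma psi0_pf b : pf 1 (fun n => psi b n 0%N).
Proof.
apply: (pf_eq (g := fun n => (if (b == 0)%N then 0 else b%:R) * (n%:~R + (1 - b%:R)))).
  move=> n; rewrite psi0; case: eqP => _; first by rewrite mul0r.
  by rewrite intrM intrD intrB /=; ring.
by apply: pf_scale; apply: pf_add; [exact: pf_X | exact: pf_const].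
Qed.

Lemma cc_pf k a : pf a (fun n => cc psi k a n).
Proof.
apply: pf_mono (pf_prod (index_iota (k - a + 1) k.+1) (fun b => psi0_pf b)).
by rewrite muln1 size_iota; lia.
Qed.

Lemma cc_k0 k n : cc psi k 0 n = 1.
Proof. by rewrite /cc subn0 addn1 /index_iota subnn big_nil. Qed.

Lemma cc_k1 k n : (1 <= k)%N -> cc psi k 1 n = psi k n 0%N.
Proof.
move=> k1; rewrite /cc /index_iota.
have -> : (k - 1 + 1 = k)%N by lia.
by rewrite subSnn /= big_cons big_nil mulr1.
Qed.

Lemma cc_kk_neq0 k (n : nat) : (k <= n)%N -> cc psi k k n%:Z != 0.
Proof.
move=> kn; rewrite /cc prodf_seq_neq0; apply/allP => b.
rewrite mem_index_iota => /andP [b1 b2]; rewrite /= psi0.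
have -> : (b == 0)%N = false by apply/negbTE; lia.
by rewrite intr_eq0_c0 // mulf_neq0 //; apply/eqP; lia.
Qed.

Lemma cc_dd d (n : int) :
  cc psi d d n = d`!%:R * \prod_(i <- iota 0 d) (n%:~R - i%:R).
Proof.
rewrite /cc subnn add0n fact_prod natr_prod /index_iota subSS subn0.
have -> : \prod_(i <- iota 0 d) (n%:~R - i%:R) = \prod_(b <- iota 1 d) (n%:~R - (b.-1)%:R) :> K.
  by apply: big_iota_shift => i _; rewrite add0n.
rewrite -big_split /=; apply: big_iota_shift => i _.
rewrite psi0 add1n /= intrM intrD intrB /= -natr1; ring.
Qed.

Lemma T0_inC d z : inC0 d z -> inC0 d (T0 psi z).
Proof.
move=> Hz k kd n; rewrite /T0 big_nat_cond big1 // => a /andP [/andP [_ ak] _].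
by rewrite Hz ?mulr0 //; apply: leq_trans kd.
Qed.

Lemma T0_verma d z : inC0 d z -> verma0 d (T0 psi z).
Proof.
move=> Hz.
pose Z : sqc K := fun a n j => if (j == 0)%N then z a n else 0.
have ZC : inC d Z.
  move=> k kd; apply: functional_extensionality => n; apply: ps_ext => j.
  by rewrite /Z Hz //; case: (j == 0)%N.
have E : forall k n, T0 psi z k n = ltimes d psi Z k n 0%N.
  move=> k n; rewrite ltimes_d0 //.
  have [_ ->] := @ltimes_low K psi Z 0%N (fun l (l0 : (l < 0)%N) => False_ind _ (notF l0)) k n.
  by [].
have [V1 V2] := ltimes_verma Hpsi ZC.
split.
  by move=> k n dk kn; rewrite E V1.
by move=> k n dk; rewrite !E V2.
Qed.

Lemma verma0_sub d g h : verma0 d g -> verma0 d h -> verma0 d (fun k n => g k n - h k n).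
Proof.
move=> [g1 g2] [h1 h2]; split.
  by move=> k n dk kn; rewrite g1 ?h1 ?subrr.
by move=> k n dk; rewrite g2 ?h2.
Qed.

Lemma inj0 (z : nat -> int -> K) : (forall a, exists D, pf D (z a)) ->
  (forall k n, T0 psi z k n = 0) -> forall a n, z a n = 0.
Proof.
move=> Hp HT; elim/ltn_ind => k IH.
have [D HD] := Hp k.
apply: (pf_zero_shift charK (c := - (k%:Z)) HD) => t.
have := HT k (t + k)%N%:Z.
rewrite /T0 big_nat_recr //= big_nat_cond big1 ?add0r; last first.
  by move=> a /andP [/andP [_ ak] _]; rewrite IH ?mulr0.
have -> : ((t + k)%N%:Z - (2 * k)%N%:Z) = t%:Z + - k%:Z by lia.
by move/eqP; rewrite mulf_eq0 (negbTE (cc_kk_neq0 (leq_addl _ _))) => /eqP.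
Qed.

End ORD0.

Section SURJ0.
Variable K : fieldType.
Hypothesis charK : [pchar K] =i pred0.
Variable psi : sqc K.
Hypothesis Hpsi : colouring psi.

Lemma natr_inj_c0 : injective (fun i : nat => i%:R : K).
Proof. by move=> a b /= E; have /(@intr_inj_c0 _ charK) [] : (a%:Z)%:~R = (b%:Z)%:~R :> K. Qed.

Lemma pf_zero_range D (h : int -> K) s : pf D h ->
  (forall i, (i < D.+1)%N -> h (s + i)%N%:Z = 0) -> forall n, h n = 0.
Proof.
move=> [p [sp Hp]] H n; rewrite Hp.
rewrite (@roots_geq_poly_eq0 K p [seq ((s + i)%N%:R : K) | i <- iota 0 D.+1]) ?horner0 //.
- apply/allP => x /mapP [i]; rewrite mem_iota add0n => iD ->.
  by rewrite /root -(H i iD) Hp.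
- rewrite map_inj_uniq ?iota_uniq // => a b /natr_inj_c0 /eqP.
  by rewrite eqn_add2l => /eqP.
- by rewrite size_map size_iota.
Qed.

Lemma zero_case D d (g : nat -> int -> K) : (D < d)%N -> inC0 d g -> verma0 d g ->
  (forall k, (d <= k)%N -> pf D (g k)) -> forall k n, g k n = 0.
Proof.
move=> Dd Hc [V1 _] Hp k n; case: (ltnP k d) => kd; first exact: Hc.
apply: (pf_zero_range (s := (k - d)%N) (Hp k kd)) => i iD.
by apply: V1 => //; apply/andP; split; lia.
Qed.

Definition Spec0 d (g : nat -> int -> K) D j (z : nat -> int -> K) :=
  [/\ inC0 d z, (forall a, pf D (z a)), (forall a, (d + j <= a)%N -> forall n, z a n = 0)
    & (forall k n, T0 psi z k n = g k n)].

Lemma T0_zero k n : T0 psi (fun _ _ => 0) k n = 0.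
Proof. by rewrite /T0 big1 // => a _; rewrite mulr0. Qed.

Lemma surj0_aux D : forall j d (g : nat -> int -> K), (D.+1 <= d + j)%N -> inC0 d g -> verma0 d g ->
  (forall k, (d <= k)%N -> pf D (g k)) -> exists z, Spec0 d g D j z.
Proof.
have Zc : forall d j (g : nat -> int -> K), (D < d)%N -> inC0 d g -> verma0 d g ->
  (forall k, (d <= k)%N -> pf D (g k)) -> exists z, Spec0 d g D j z.
  move=> d j g Dd Hc Hv Hp; exists (fun _ _ => 0); split => //.
  - by move=> a; apply: pf_const.
  - by move=> k n; rewrite T0_zero (zero_case Dd Hc Hv Hp).
elim=> [|j IH] d g Dj Hc Hv Hp.
  by apply: Zc => //; rewrite addn0 in Dj.
case: (ltnP D d) => dD; first exact: Zc.
have [p [sp Hpp]] := Hp d (leqnn d).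
pose rs := [seq i%:R | i <- iota 0 d] : seq K.
have [q Epq] : exists q, p = q * \prod_(x <- rs) ('X - x%:P).
  apply: uniq_roots_prod_XsubC.
    apply/allP => x /mapP [i]; rewrite mem_iota add0n => id ->.
    rewrite /root; have <- : (i%:Z)%:~R = i%:R :> K by [].
    rewrite -Hpp; case: Hv => V1 _; rewrite V1 //; apply/andP; split; lia.
  rewrite uniq_rootsE map_inj_uniq ?iota_uniq //; exact: natr_inj_c0.
have sq : (size q <= (D - d).+1)%N.
  have [->|qn0] := eqVneq q 0; first by rewrite size_poly0.
  move: sp; rewrite Epq size_Mmonic ?monic_prod_XsubC // size_prod_XsubC size_map size_iota.
  rewrite addnS /= => H; rewrite -(leq_add2r d); apply: leq_trans H _; lia.
pose xd (m : int) := q.[(m + (2 * d)%N%:Z)%:~R] * (d`!%:R)^-1.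
have xdpf : pf (D - d) xd.
  apply: (pf_eq (g := fun m => (d`!%:R)^-1 * q.[(m + (2 * d)%N%:Z)%:~R])).
    by move=> m; rewrite mulrC.
  apply: pf_scale; apply: (pf_shift (g := fun m => q.[m%:~R])).
  by exists q; split.
pose z0 (a : nat) (m : int) := if (a == d)%N then xd m else 0.
have z0C : inC0 d z0 by move=> a ad m; rewrite /z0 ifN //; apply/eqP; lia.
have T0z0 : forall k n, T0 psi z0 k n = if (d <= k)%N then cc psi k d n * xd (n - (2 * k)%N%:Z) else 0.
  move=> k n; rewrite /T0.
  rewrite (eq_bigr (fun a => if (a == d)%N then cc psi k d n * xd (n - (2 * k)%N%:Z) else 0)); last first.
    by move=> a _; rewrite /z0; case: eqP => [->|_]; rewrite ?mulr0.
  by rewrite -big_mkcond big_nat1_eq /= ltnS.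
pose g' k n := g k n - T0 psi z0 k n.
have g'd : forall n, g' d n = 0.
  move=> n; rewrite /g' T0z0 leqnn Hpp Epq hornerM horner_prod cc_dd //.
  rewrite /xd big_map.
  have -> : (n - (2 * d)%N%:Z + (2 * d)%N%:Z) = n by lia.
  have f0 : d`!%:R != 0 :> K by rewrite (pcharf0P K).1 // -lt0n fact_gt0.
  rewrite (eq_bigr (fun i => n%:~R - i%:R)); last by move=> i _; rewrite hornerXsubC.
  by field.
have g'C : inC0 d.+1 g'.
  move=> k kd n; case: (ltnP k d) => kd'.
    by rewrite /g' Hc // (T0_inC psi z0C) // subrr.
  by have -> : k = d by lia.
have g'V : verma0 d.+1 g'.
  have [W1 W2] := verma0_sub Hv (T0_verma Hpsi z0C).
  split.
    move=> k n dk /andP [k1 k2]; case: (ltnP k (n + d).+1) => kn.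
      by apply: W1; [lia | apply/andP; split; lia].
    have -> : k = (n + d + 1)%N by lia.
    by have := W2 d n (leqnn d); rewrite /g' => ->; have := g'd (- n%:Z - 2); rewrite /g'.
  by move=> k n dk; apply: W2; lia.
have g'P : forall k, (d.+1 <= k)%N -> pf D (g' k).
  move=> k dk; apply: pf_add; first by apply: Hp; lia.
  apply: pf_opp; apply: (pf_eq (g := fun n => cc psi k d n * xd (n - (2 * k)%N%:Z))).
    by move=> n; rewrite T0z0 ifT //; lia.
  have -> : D = (d + (D - d))%N by lia.
  apply: pf_mul; first exact: cc_pf.
  by apply: (pf_shift (g := xd)).
have [z' [z'C z'P z'Z z'T]] := IH d.+1 g' ltac:(lia) g'C g'V g'P.
exists (fun a n => 1 * z0 a n + z' a n); split.
- by move=> a ad n; rewrite z0C // z'C ?mulr0 ?add0r //; lia.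
- move=> a; apply: pf_add; last exact: z'P.
  apply: pf_scale; rewrite /z0; case: eqP => _; last exact: pf_const.
  by apply: pf_mono xdpf; apply: leq_subr.
- move=> a aj n; rewrite z'Z; last by lia.
  by rewrite /z0 ifN ?mulr0 ?addr0 //; apply/eqP; lia.
- move=> k n; rewrite T0_lin z'T mul1r /g'; ring.
Qed.

Lemma surj0 d (g : nat -> int -> K) : inC0 d g -> verma0 d g ->
  (exists D, forall k, (d <= k)%N -> pf D (g k)) ->
  exists z, [/\ inC0 d z, (exists D, forall a, pf D (z a)),
     (exists A, forall a, (A <= a)%N -> forall n, z a n = 0)
   & (forall k n, T0 psi z k n = g k n)].
Proof.
move=> Hc Hv [D Hp]; have [z [zC zP zZ zT]] := @surj0_aux D D.+1 d g (leq_addl _ _) Hc Hv Hp.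
by exists z; split => //; [exists D | exists (d + D.+1)%N].
Qed.

End SURJ0.

Section HADIC.
Variable K : fieldType.
Hypothesis charK : [pchar K] =i pred0.
Variable psi : sqc K.
Hypothesis Hpsi : colouring psi.

Lemma ltimes0_add (xi eta : sqc K) k n j :
  ltimes 0 psi (fun a n l => xi a n l + eta a n l) k n j
  = ltimes 0 psi xi k n j + ltimes 0 psi eta k n j.
Proof.
rewrite !ltimes0_coef -big_split; apply: eq_bigr => a _.
by rewrite -big_split; apply: eq_bigr => i _; rewrite mulrDr.
Qed.

Lemma ltimes0_opp (xi : sqc K) k n j :
  ltimes 0 psi (fun a n l => - xi a n l) k n j = - ltimes 0 psi xi k n j.
Proof.
rewrite !ltimes0_coef -sumrN; apply: eq_bigr => a _.
by rewrite -sumrN; apply: eq_bigr => i _; rewrite mulrN.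
Qed.

Lemma verma_coef d (F : sqc K) m : verma d F -> verma0 d (fun k n => F k n m).
Proof.
move=> [V1 V2]; split; first by move=> k n dk kn; rewrite V1.
by move=> k n dk; rewrite V2.
Qed.

Lemma inj_ps d (xi eta : sqc K) : inC d xi -> regular d xi -> inC d eta -> regular d eta ->
  ltimes d psi xi = ltimes d psi eta -> xi = eta.
Proof.
move=> xC xR eC eR E.
pose z : sqc K := fun a n l => xi a n l + - eta a n l.
have Lz : forall k n j, ltimes 0 psi z k n j = 0.
  move=> k n j; rewrite ltimes0_add ltimes0_opp -(ltimes_d0 psi xC) -(ltimes_d0 psi eC) E.
  by rewrite subrr.
have H : forall m l, (l < m)%N -> forall a n, z a n l = 0.
  elim=> [//|m IH] l; rewrite ltnS leq_eqVlt => /orP [/eqP -> | lm]; last exact: IH.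
  apply: (inj0 charK Hpsi (z := fun a n => z a n m)).
    move=> a; have [D1 H1] := all_pf xC xR m; have [D2 H2] := all_pf eC eR m.
    exists (maxn D1 D2); apply: pf_add.
      by apply: pf_mono (H1 m a (leqnn m)); rewrite leq_maxl.
    by apply: pf_opp; apply: pf_mono (H2 m a (leqnn m)); rewrite leq_maxr.
  move=> k n; have [_ <-] := ltimes_low psi IH k n; exact: Lz.
apply: functional_extensionality => a; apply: functional_extensionality => n.
apply: ps_ext => l; apply/eqP; rewrite -subr_eq0; apply/eqP; exact: (H l.+1).
Qed.

Section Surj.
Variable d : nat.
Variable f : sqc K.
Hypothesis Pc : inC 1 psi.
Hypothesis Pr : regular 1 psi.
Hypothesis fC : inC d f.
Hypothesis fR : regular d f.
Hypothesis fV : verma d f.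

Definition spec0 (g z : nat -> int -> K) := [/\ inC0 d z, (exists D, forall a, pf D (z a)),
     (exists A, forall a, (A <= a)%N -> forall n, z a n = 0)
   & (forall k n, T0 psi z k n = g k n)].

Definition sol0 (g : nat -> int -> K) : nat -> int -> K :=
  epsilon (inhabits (fun _ _ => 0)) (spec0 g).

Fixpoint X (m : nat) : sqc K :=
  match m with
  | 0 => fun _ _ _ => 0
  | m'.+1 => let z := sol0 (fun k n => f k n m' - ltimes 0 psi (X m') k n m') in
      fun k n j => if (j == m')%N then z k n else X m' k n j
  end.

Definition Inv m := [/\ (forall k n j, (m <= j)%N -> X m k n j = 0), inC d (X m),
  regular d (X m), summable (X m) &
  (forall k n j, (j < m)%N -> ltimes 0 psi (X m) k n j = f k n j)].

Lemma Inv_all m : Inv m.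
Proof.
elim: m => [|m [I1 I2 I3 I4 I5]].
  split.
  - by [].
  - by move=> k kd; apply: functional_extensionality => n.
  - by move=> j; exists 0%N => k _; exists 0; split; [rewrite size_poly0 | move=> n; rewrite horner0].
  - by move=> j; exists 0%N.
  - by [].
set r := fun k n => f k n m - ltimes 0 psi (X m) k n m.
have rC : inC0 d r.
  move=> k kd n; rewrite /r fC // -(ltimes_d0 psi I2) (ltimes_inC psi (X m) kd).
  by rewrite /ps0 subrr.
have rV : verma0 d r.
  apply: (verma0_sub (verma_coef m fV)).
  have := verma_coef m (ltimes_verma Hpsi I2).
  by rewrite (ltimes_d0 psi I2).
have rP : exists D, forall k, (d <= k)%N -> pf D (r k).
  have [D1 H1] := (regular_pf _ _).1 fR m.
  have [D2 H2] := (regular_pf _ _).1 (ltimes_reg Pc Pr I2 I3 I4) m.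
  exists (maxn D1 D2) => k dk; apply: pf_add.
    by apply: pf_mono (H1 k dk); rewrite leq_maxl.
  apply: pf_opp; apply: (pf_eq (g := fun n => ltimes d psi (X m) k n m)).
    by move=> n; rewrite (ltimes_d0 psi I2).
  by apply: pf_mono (H2 k dk); rewrite leq_maxr.
have [z Sz] := surj0 charK Hpsi rC rV rP.
have : spec0 r (sol0 r) by apply: epsilon_spec; exists z; case: Sz => *; split.
case=> zC [Dz zP] [Az zZ] zT.
have XE : X m.+1 = fun k n j => if (j == m)%N then sol0 r k n else X m k n j by [].
split.
- move=> k n j mj; rewrite XE /= ifN ?I1 //; [lia | apply/eqP; lia].
- move=> k kd; apply: functional_extensionality => n; apply: ps_ext => j.
  rewrite XE /=; case: eqP => _; first by rewrite zC.
  by rewrite I2.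
- move=> j; case: (eqVneq j m) => [->|jm].
    by exists Dz.+1 => k _; have [p [sp Hp]] := zP k; exists p; split => // n; rewrite XE /= eqxx.
  have [D HD] := I3 j; exists D => k dk; have [p [sp Hp]] := HD k dk.
  by exists p; split => // n; rewrite XE /= (negbTE jm).
- move=> j; case: (eqVneq j m) => [->|jm].
    by exists Az => k kA n; rewrite XE /= eqxx zZ.
  have [A HA] := I4 j; exists A => k kA n.
  by rewrite XE /= (negbTE jm) HA.
- move=> k n j; rewrite ltnS leq_eqVlt => /orP [/eqP -> | jm].
    have -> : X m.+1 = fun a n l => X m a n l + (if (l == m)%N then sol0 r a n else 0).
      rewrite XE; apply: functional_extensionality => a; apply: functional_extensionality => n'.
      apply: ps_ext => l; case: eqP => [->|_]; last by rewrite addr0.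
      by rewrite I1 // add0r.
    rewrite ltimes0_add.
    have Dlow : forall l, (l < m)%N -> forall a n,
        (fun a n l => if (l == m)%N then sol0 r a n else 0) a n l = 0.
      by move=> l lm a n'; rewrite /= ltn_eqF.
    have [_ ->] := @ltimes_low K psi (fun a n l => if (l == m)%N then sol0 r a n else 0) m
      Dlow k n.
    rewrite (_ : (fun a n => if (m == m)%N then sol0 r a n else 0) = sol0 r); last first.
      by apply: functional_extensionality => a; apply: functional_extensionality => n'; rewrite eqxx.
    by rewrite zT /r addrC subrK.
  rewrite -(I5 k n j jm); apply: ltimes_agree => l lj a n'.
  by rewrite XE /= ifN //; apply/eqP; lia.
Qed.

Lemma X_stable m j k n : (j < m)%N -> X m k n j = X j.+1 k n j.
Proof.
elim: m => [//|m IH]; rewrite ltnS leq_eqVlt => /orP [/eqP -> //| jm].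
by rewrite /= ifN ?IH //; apply/eqP; lia.
Qed.

Definition Xi : sqc K := fun k n j => X j.+1 k n j.

Lemma Xi_spec : [/\ inC d Xi, regular d Xi, summable Xi & ltimes d psi Xi = f].
Proof.
have XiC : inC d Xi.
  move=> k kd; apply: functional_extensionality => n; apply: ps_ext => j.
  by case: (Inv_all j.+1) => _ I2 _ _ _; rewrite /Xi I2.
split => //.
- move=> j; case: (Inv_all j.+1) => _ _ I3 _ _; have [D HD] := I3 j.
  by exists D => k dk; have [p [sp Hp]] := HD k dk; exists p.
- move=> j; case: (Inv_all j.+1) => _ _ _ I4 _; have [A HA] := I4 j.
  by exists A.
- rewrite ltimes_d0 //; apply: functional_extensionality => k; apply: functional_extensionality => n.
  apply: ps_ext => j; case: (Inv_all j.+1) => _ _ _ _ I5.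
  rewrite -(I5 k n j (ltnSn j)); apply: ltimes_agree => l lj a n'.
  by rewrite /Xi (@X_stable j.+1 l).
Qed.

End Surj.
End HADIC.

Section ONLYIF.
Variable K : fieldType.
Hypothesis charK : [pchar K] =i pred0.
Variable psi : sqc K.
Hypothesis Hpsi : colouring psi.

Lemma Prod_k0 k n : Prod psi k 0 n = ps1 K.
Proof. by rewrite /Prod subn0 addn1 /index_iota subnn big_nil. Qed.

Lemma Prod_k1 k n : (1 <= k)%N -> Prod psi k 1 n = psi k n.
Proof.
move=> k1; rewrite /Prod /index_iota.
have -> : (k - 1 + 1 = k)%N by lia.
by rewrite subSnn /= big_cons big_nil ps_mulr1.
Qed.

Definition cand (a : nat) (m : int) : K :=
  if (a == 0)%N then m%:~R else if (a == 1)%N then 1 else 0.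

Lemma T0_cand k n : T0 psi cand k n = ((k.+1)%:Z * (n - (k.+1)%:Z + 1))%:~R.
Proof.
rewrite /T0 big_ltn // cc_k0 mul1r /cand /=.
case: k => [|k].
  by rewrite big_geq // addr0 mul1r; congr (_ %:~R); lia.
rewrite big_ltn // cc_k1 // /= mulr1 big_nat_cond big1 ?addr0; last first.
  by move=> a /andP [/andP [a2 _] _]; rewrite !ifN ?mulr0 //; apply/eqP; lia.
have [_ C1 _ _] := Hpsi; rewrite C1 //.
rewrite !(intrM, intrD, intrN) -!pmulrn; ring.
Qed.

Variable xi : sqc K.
Hypothesis xR : regular 0 xi.
Hypothesis xS : summable xi.
Hypothesis xE : ltimes 0 psi xi = shift1 psi.

Lemma xC : inC 0 xi.
Proof. by []. Qed.

Lemma xi0 : forall a m, xi a m 0%N = cand a m.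
Proof.
have Hz := inj0 charK Hpsi (z := fun a m => -1 * cand a m + xi a m 0%N).
move=> a m; apply/eqP; rewrite -subr_eq0 addrC -mulN1r; apply/eqP; apply: Hz.
  move=> a'; have [D HD] := all_pf xC xR 0.
  exists (maxn 1 D); apply: pf_add.
    apply: pf_scale; rewrite /cand; case: eqP => _; first by apply: (pf_mono (D := 1%N)); [exact: leq_maxl | exact: pf_X].
    by apply: pf_const.
  by apply: pf_mono (HD 0%N a' (leqnn 0)); exact: leq_maxr.
move=> k n; rewrite T0_lin T0_cand.
have [_ <-] := @ltimes_low K psi xi 0%N (fun l (l0 : (l < 0)%N) => False_ind _ (notF l0)) k n.
have [_ C1 _ _] := Hpsi.
by rewrite xE /shift1 C1 // mulN1r addNr.
Qed.

Lemma psi_reg : regular 1 psi.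
Proof.
have Pc : inC 1 psi by case: Hpsi.
suff Q : forall m, exists D, forall l b, (l <= m)%N -> pf D (fun n => psi b n l).
  apply/regular_pf => m; have [D HD] := Q m; exists D => k _; exact: HD.
elim=> [|m [Dp HDp]].
  by exists 1%N => l b; rewrite leqn0 => /eqP ->; apply: psi0_pf.
set M := m.+1.
have [A HA] := summ_upto xS M.
have [Dx HDx] := all_pf xC xR M.
pose B := (A * Dp + Dx)%N.
pose R k n := \sum_(0 <= a < k.+1) \sum_(i < M)
      Prod psi k a n i * xi a (n - (2 * k)%N%:Z) (M - i)%N.
have RP : forall k, pf B (R k).
  move=> k; apply: pf_sum => a _; case: (ltnP a A) => aA.
    apply: pf_sum => i _; apply: pf_mul.
      apply: (pf_mono (D := (a * Dp)%N)); first by rewrite leq_mul2r ltnW ?orbT.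
      apply: (Prod_pf (i := m)); first by move=> b l lm; apply: HDp.
      by rewrite -ltnS.
    by apply: (pf_shift (g := fun n => xi a n (M - i)%N)); apply: HDx; exact: leq_subr.
  apply: (pf_eq _ (pf_const _ 0)) => n; rewrite big1 // => i _.
  by rewrite HA ?mulr0 // leq_subr.
have RE : forall k n, psi k.+1 n M = R k n + (if (1 <= k)%N then psi k n M else 0).
  move=> k n.
  have -> : psi k.+1 n M = ltimes 0 psi xi k n M by rewrite xE.
  rewrite ltimes0_coef /R.
  rewrite (eq_bigr (fun a => \sum_(i < M) Prod psi k a n i * xi a (n - (2 * k)%N%:Z) (M - i)%N
       + Prod psi k a n M * cand a (n - (2 * k)%N%:Z))); last first.
    by move=> a _; rewrite big_ord_recr /= subnn xi0.
  rewrite big_split /=; congr (_ + _).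
  rewrite big_ltn // Prod_k0 /ps1 /= mul0r add0r.
  case: k => [|k]; first by rewrite big_geq.
  rewrite big_ltn // Prod_k1 // /cand /= mulr1 big_nat_cond big1 ?addr0 //.
  by move=> a /andP [/andP [a2 _] _]; rewrite !ifN ?mulr0 //; apply/eqP; lia.
have PM : forall b, pf B (fun n => psi b n M).
  elim=> [|k IH]; first by apply: (pf_eq _ (pf_const _ 0)) => n; rewrite Pc.
  apply: (pf_eq _ (pf_add (RP k) (h := fun n => if (1 <= k)%N then psi k n M else 0) _)).
    by move=> n; rewrite RE.
  by case: (1 <= k)%N => //; apply: pf_const.
exists (maxn Dp B) => l b; rewrite leq_eqVlt => /orP [/eqP -> | lm].
  by apply: pf_mono (PM b); rewrite leq_maxr.
by apply: pf_mono (HDp l b lm); rewrite leq_maxl.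
Qed.

End ONLYIF.

Unset Implicit Arguments.

Theorem mainTheorem6 (K : fieldType) (charK : [pchar K] =i pred0)
  (psi : sqc K) (Hpsi : colouring psi) :
  ((exists xi : sqc K, inC 0 xi /\ regular 0 xi /\ summable xi /\
        ltimes 0 psi xi = shift1 psi)
     <-> regular 1 psi)
  /\
  (regular 1 psi -> forall d : nat,
     (forall (c : ps K) (xi eta : sqc K),
        inC d xi -> regular d xi -> summable xi ->
        inC d eta -> regular d eta -> summable eta ->
        ltimes d psi (sqc_add (sqc_scale c xi) eta)
          = sqc_add (sqc_scale c (ltimes d psi xi)) (ltimes d psi eta))
     /\
     (forall xi : sqc K, inC d xi -> regular d xi -> summable xi ->
        inC d (ltimes d psi xi) /\ regular d (ltimes d psi xi) /\ verma d (ltimes d psi xi))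
     /\
     (forall xi eta : sqc K,
        inC d xi -> regular d xi -> summable xi ->
        inC d eta -> regular d eta -> summable eta ->
        ltimes d psi xi = ltimes d psi eta -> xi = eta)
     /\
     (forall f : sqc K, inC d f -> regular d f -> verma d f ->
        exists xi : sqc K, inC d xi /\ regular d xi /\ summable xi /\ ltimes d psi xi = f)).
Proof.
have Pc : inC 1 psi by case: Hpsi.
have surj : regular 1 psi -> forall d (f : sqc K), inC d f -> regular d f -> verma d f ->
    exists xi : sqc K, inC d xi /\ regular d xi /\ summable xi /\ ltimes d psi xi = f.
  move=> Pr d f fC fR fV.
  have [? ? ? ?] := Xi_spec charK Hpsi Pc Pr fC fR fV.
  by eexists; split; [eassumption | split; [eassumption | split; eassumption]].
split.
  split.
    by move=> [xi [_ [xR [xS xE]]]]; exact: (psi_reg charK Hpsi xR xS xE).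
  move=> Pr; apply: (surj Pr 0%N (shift1 psi)) => //.
  - move=> m; have [D HD] := Pr m; exists D => k _; exact: HD.
  - case: Hpsi => _ _ _ C3; split; first by move=> k n _ /andP [a b]; exfalso; lia.
    move=> k n _; rewrite /shift1.
    have -> : (n + k + 1).+1 = (n + k.+1 + 1)%N by lia.
    by rewrite C3.
move=> Pr d; split; first by move=> c xi eta *; apply: ltimes_lin.
split.
  move=> xi xC xR xS; split; first exact: ltimes_inC.
  by split; [exact: ltimes_reg | exact: ltimes_verma].
split; last exact: surj Pr d.
by move=> xi eta xC xR _ eC eR _; apply: (inj_ps charK Hpsi xC xR eC eR).
Qed.
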